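(* Let $n$ be the number of validators and $f\in[0,n]$. Suppose (A) the algorithm by which validators cast FFG-votes guarantees, for every validator following it: at most one FFG-vote is sent in any slot; the target $\mathcal{T}$ of the FFG-vote sent in slot $t$ has $\mathcal{T}.c=t$; and if $\mathcal{S},\mathcal{S}'$ are the sources of FFG-votes sent in slots $t\le t'$ then $\mathcal{S}\le\mathcal{S}'$; and (B) for every round $r$ and every validator $v_i$ honest in round $r$, the chain $\chi^{\mathrm{fin}}_i$ output by $v_i$ at round $r$ is a chain finalized according to the global view $\mathcal{V}^r_{\mathsf{G}}$ (the set of all messages sent up to round $r$). Then the finalized chain $\chi^{\mathrm{fin}}$ is $\frac{n}{3}$-accountable.
   Context: Validators $v_1,\dots,v_n$ exchange signed messages; time is divided into rounds grouped into slots. A validator is honest until it is (possibly) corrupted by the adversary, after which it may deviate arbitrarily; honest validators follow the protocol. Blocks are pairs $(b,p)$ with $p$ the slot; chains are identified with their last block, $\chi.p$ is the slot of the last block; genesis $B_{\text{genesis}}$ has slot $-1$; $\preceq$ is the prefix relation and chains conflict if neither is a prefix of the other. Checkpoints $\mathcal{C}=(\chi,c)$; FFG-vote $\mathcal{C}_1\to\mathcal{C}_2$ valid iff $\mathcal{C}_1.c<\mathcal{C}_2.c$ and $\mathcal{C}_1.\chi\preceq\mathcal{C}_2.\chi$; FFG-votes are carried inside VOTE messages. In a view (set of messages) $\mathcal{V}$: $\mathcal{C}$ is justified iff $\mathcal{C}=(B_{\text{genesis}},0)$ or there are VOTE messages in $\mathcal{V}$ from at least $\frac{2}{3}n$ distinct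 validators whose FFG-votes $\mathcal{S}\to\mathcal{T}$ are valid, with $\mathcal{S}$ justified in $\mathcal{V}$, $\mathcal{S}.\chi\preceq\mathcal{C}.\chi\preceq\mathcal{T}.\chi$, $\mathcal{T}.c=\mathcal{C}.c$; $\mathcal{C}$ is finalized iff $\mathcal{C}=(B_{\text{genesis}},0)$ or $\mathcal{C}$ is justified and there are VOTE messages in $\mathcal{V}$ from at least $\frac{2}{3}n$ distinct validators with valid FFG-votes $\mathcal{C}\to\mathcal{T}$, $\mathcal{T}.c=\mathcal{C}.c+1$. A chain is finalized according to $\mathcal{V}$ iff it is a prefix of the chain of a checkpoint finalized in $\mathcal{V}$. Preorder: $\mathcal{C}\le\mathcal{C}'$ iff $\mathcal{C}.c<\mathcal{C}'.c$ or ($\mathcal{C}.c=\mathcal{C}'.c$ and $\mathcal{C}.\chi.p\le\mathcal{C}'.\chi.p$); $<$ is its strict part. Slashing conditions for two distinct FFG-votes $\mathcal{C}_1\to\mathcal{C}_2$, $\mathcal{C}_3\to\mathcal{C}_4$ by the same validator: $\mathbf{E_1}$: $\mathcal{C}_2.c=\mathcal{C}_4.c$; $\mathbf{E_2}$: $\mathcal{C}_3<\mathcal{C}_1$ and $\mathcal{C}_2.c<\mathcal{C}_4.c$. Accountability: a protocol outputting chain $\chi^{\mathrm{fin}}$ is $f^{\mathrm{acc}}$-accountable if, whenever safety is violated (two validators, honest at rounds $r,r'$ respectively, output chains $\chi^{\mathrm{fin},r}_i$, $\chi^{\mathrm{fin},r'}_j$ that conflict), then, having access to all messages sent, it is possible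 to produce a proof identifying at least $f^{\mathrm{acc}}$ validators as protocol violators, and such a proof can never falsely accuse an honest validator that followed the protocol. *)

(* Defs.v *)
From HB Require Import structures.
From mathcomp Require Import all_boot all_order all_algebra.
Set Implicit Arguments. Unset Strict Implicit. Unset Printing Implicit Defensive.
Import Order.TTheory GRing.Theory Num.Theory.

Section Model.

(* B : type of block contents; a block is a pair (b, p) with p its slot. *)
Variable B : Type.

Definition block := (B * nat)%type.

(* A chain is the sequence of blocks following genesis (genesis itself is
   implicit, with slot -1); slots strictly increase along a chain.
   The chain is identified with its last block. *)
Definition chain := {s : seq block | sorted ltn (map snd s)}.

Definition blocks (x : chain) : seq block := sval x.

Definition genesis : chain :=
  exist (fun s : seq block => sorted ltn (map snd s)) [::] (erefl true).

Definition chain_slot (x : chain) : int :=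
  if blocks x is [::] then (-1)%R else Posz (last 0%N (map snd (blocks x))).

Definition prefix (x y : chain) : Prop := exists s, blocks y = blocks x ++ s.

Definition conflicting (x y : chain) : Prop := ~ prefix x y /\ ~ prefix y x.

Record checkpoint := Checkpoint { cp_chain : chain; cp_c : nat }.

Definition genesis_cp : checkpoint := Checkpoint genesis 0.

Definition valid_ffg (S T : checkpoint) : Prop :=
  (cp_c S < cp_c T)%N /\ prefix (cp_chain S) (cp_chain T).

Definition cp_le (C C' : checkpoint) : Prop :=
  (cp_c C < cp_c C')%N \/
  (cp_c C = cp_c C' /\ (chain_slot (cp_chain C) <= chain_slot (cp_chain C'))%R).

Definition cp_lt (C C' : checkpoint) : Prop := cp_le C C' /\ ~ cp_le C' C.

Variable n : nat.  (* validators are 'I_n *)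

(* A VOTE message (only its signer and its FFG-vote S -> T matter here). *)
Record vote_msg := VoteMsg { vm_sender : 'I_n; vm_src : checkpoint; vm_tgt : checkpoint }.

Definition view := vote_msg -> Prop.

Definition two_thirds (S : {set 'I_n}) : Prop := (2 * n <= 3 * #|S|)%N.

Inductive justified (V : view) : checkpoint -> Prop :=
| justified_genesis : justified V genesis_cp
| justified_votes (C : checkpoint) (S : {set 'I_n}) :
    two_thirds S ->
    (forall v, v \in S -> exists m, V m /\ vm_sender m = v /\
        valid_ffg (vm_src m) (vm_tgt m) /\ justified V (vm_src m) /\
        prefix (cp_chain (vm_src m)) (cp_chain C) /\
        prefix (cp_chain C) (cp_chain (vm_tgt m)) /\
        cp_c (vm_tgt m) = cp_c C) ->
    justified V C.

Definition finalized (V : view) (C : checkpoint) : Prop :=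
  C = genesis_cp \/
  (justified V C /\
   exists S : {set 'I_n}, two_thirds S /\
     forall v, v \in S -> exists m, V m /\ vm_sender m = v /\
        vm_src m = C /\ valid_ffg (vm_src m) (vm_tgt m) /\
        cp_c (vm_tgt m) = (cp_c C).+1).

Definition chain_finalized (V : view) (x : chain) : Prop :=
  exists C, finalized V C /\ prefix x (cp_chain C).

(* slashing conditions, for two distinct FFG-votes C1 -> C2 and C3 -> C4 *)
Definition E1 (C1 C2 C3 C4 : checkpoint) : Prop := cp_c C2 = cp_c C4.
Definition E2 (C1 C2 C3 C4 : checkpoint) : Prop :=
  cp_lt C3 C1 /\ (cp_c C2 < cp_c C4)%N.

Definition slashable (V : view) (v : 'I_n) : Prop :=
  exists m1 m2, V m1 /\ V m2 /\ vm_sender m1 = v /\ vm_sender m2 = v /\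
    (vm_src m1, vm_tgt m1) <> (vm_src m2, vm_tgt m2) /\
    (E1 (vm_src m1) (vm_tgt m1) (vm_src m2) (vm_tgt m2) \/
     E2 (vm_src m1) (vm_tgt m1) (vm_src m2) (vm_tgt m2)).

(* An execution: sent r m = message m is sent at round r (by vm_sender m);
   honest r v = validator v is honest at round r (honest until corrupted);
   fin_out v r = chain chi^fin output by v at round r. *)
Record execution := Execution {
  sent : nat -> vote_msg -> Prop;
  honest : nat -> 'I_n -> Prop;
  honest_until_corrupted : forall r r' v, (r' <= r)%N -> honest r v -> honest r' v;
  fin_out : 'I_n -> nat -> chain
}.

Variable E : execution.
Variable k : nat. (* number of rounds per slot; round r is in slot r %/ k *)

Definition slot_of (r : nat) : nat := (r %/ k)%N.

Definition global_view (r : nat) : view := fun m => exists r', (r' <= r)%N /\ sent E r' m.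

Definition all_msgs : view := fun m => exists r, sent E r m.

(* Hypothesis (A): properties of the FFG-voting algorithm for validators
   following it (i.e. for messages sent while honest). *)
Definition ffg_voting_ok : Prop :=
  (forall v r r' m m', honest E r v -> honest E r' v -> sent E r m -> sent E r' m' ->
     vm_sender m = v -> vm_sender m' = v -> slot_of r = slot_of r' ->
     (vm_src m, vm_tgt m) = (vm_src m', vm_tgt m')) /\
  (forall v r m, honest E r v -> sent E r m -> vm_sender m = v ->
     cp_c (vm_tgt m) = slot_of r) /\
  (forall v r r' m m', honest E r v -> honest E r' v -> sent E r m -> sent E r' m' ->
     vm_sender m = v -> vm_sender m' = v -> (slot_of r <= slot_of r')%N ->
     cp_le (vm_src m) (vm_src m')).

Definition outputs_finalized : Prop :=
  forall r v, honest E r v -> chain_finalized (global_view r) (fin_out E v r).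

Definition safety_violation : Prop :=
  exists r r' i j, honest E r i /\ honest E r' j /\
    conflicting (fin_out E i r) (fin_out E j r').

Definition accountable (facc : rat) : Prop :=
  (forall v, slashable all_msgs v -> exists r, ~ honest E r v) /\
  (safety_violation ->
     exists S : {set 'I_n}, (facc <= (#|S|)%:R)%R /\
       forall v, v \in S -> slashable all_msgs v).

End Model.

(* Main.v *)
Require Import Defs.
From mathcomp Require Import all_boot all_order all_algebra.
From Stdlib Require Import Classical.
Set Implicit Arguments. Unset Strict Implicit. Unset Printing Implicit Defensive.
Import Order.TTheory GRing.Theory Num.Theory.

Fixpoint just_mono (B : Type) (n : nat) (V W : view B n) (HVW : forall m, V m -> W m)
  (C : checkpoint B) (j : justified V C) {struct j} : justified W C :=
  match j in justified _ C0 return justified W C0 with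
  | justified_genesis => justified_genesis W
  | @justified_votes _ _ _ C0 Q hS hv =>
      @justified_votes _ _ W C0 Q hS (fun v hin =>
        match hv v hin with
        | ex_intro m (conj Vm (conj h1 (conj h2 (conj hj h3)))) =>
            ex_intro _ m (conj (HVW m Vm) (conj h1 (conj h2
               (conj (just_mono HVW hj) h3))))
        end)
  end.

Lemma cat_cmp (T : Type) (a b s t : seq T) : a ++ s = b ++ t ->
  (exists u, b = a ++ u) \/ (exists u, a = b ++ u).
Proof.
elim: a b => [|x a IH] [|y b] /=.
- by left; exists [::].
- by left; exists (y :: b).
- by right; exists (x :: a).
- case=> -> /IH [[u ->]|[u ->]]; [left|right]; by exists u.
Qed.

Section Chains.
Variable B : Type.
Implicit Types x y z : chain B.

Lemma prefix_refl x : Defs.prefix x x.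
Proof. by exists [::]; rewrite cats0. Qed.

Lemma prefix_trans x y z : Defs.prefix x y -> Defs.prefix y z -> Defs.prefix x z.
Proof. by move=> [s Hs] [t Ht]; exists (s ++ t); rewrite Ht Hs catA. Qed.

Lemma prefix_gen x : Defs.prefix (genesis B) x.
Proof. by exists (blocks x). Qed.

Lemma prefix_cmp x y z : Defs.prefix x z -> Defs.prefix y z ->
  Defs.prefix x y \/ Defs.prefix y x.
Proof.
move=> [s Hs] [t Ht]; rewrite Hs in Ht.
by case: (cat_cmp Ht) => [[u Hu]|[u Hu]]; [left|right]; exists u.
Qed.

Lemma conflict_up x1 x2 y1 y2 : conflicting x1 x2 -> Defs.prefix x1 y1 ->
  Defs.prefix x2 y2 -> conflicting y1 y2.
Proof.
move=> [n12 n21] h1 h2; split => h.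
- case: (prefix_cmp (prefix_trans h1 h) h2) => //.
- case: (prefix_cmp h1 (prefix_trans h2 h)) => //.
Qed.

Lemma conflict_gen x : ~ conflicting (genesis B) x.
Proof. by case=> H _; apply: H; apply: prefix_gen. Qed.

Lemma strict_prefix_slot x y : Defs.prefix x y -> blocks x <> blocks y ->
  (chain_slot x < chain_slot y)%R.
Proof.
move=> [s Hs] Hne.
have sy : sorted ltn (map snd (blocks y)) by case: y {Hs Hne}.
have sne : s <> [::] by move=> e; apply: Hne; rewrite Hs e cats0.
rewrite /chain_slot Hs.
case: s Hs sne sy => [|c s] // Hs _ sy.
case E: (blocks x) => [|a bx]; first by [].
rewrite /= ltz_nat.
rewrite Hs E in sy.
set L1 := map snd (a :: bx) in sy *.
have : subseq ([:: last 0%N L1] ++ [:: last 0%N (map snd (c :: s))])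
                (L1 ++ map snd (c :: s)).
  apply: cat_subseq; rewrite sub1seq /L1 /=; exact: mem_last.
move/subseq_sorted => /(_ _ ltn_trans).
rewrite -map_cat in sy * => /(_ sy) /=.
rewrite andbT /L1 /=.
by rewrite map_cat last_cat.
Qed.

Lemma conflict_sym x y : conflicting x y -> conflicting y x.
Proof. by case=> a b; split. Qed.
End Chains.

From mathcomp Require Import zify.

Lemma no_false_accusation B n k (E : execution B n) : ffg_voting_ok E k ->
  forall v, slashable (all_msgs E) v -> exists r, ~ honest E r v.
Proof.
move=> [A1 [A2 A3]] v [m1 [m2 [[r1 S1] [[r2 S2] [e1 [e2 [Hne HE]]]]]]].
apply: NNPP => Hall.
have Hh : forall r, honest E r v.
  by move=> r; apply: NNPP => H; apply: Hall; exists r.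
case: HE => [HE1 | [Hlt Hc]].
- apply: Hne; apply: (A1 v r1 r2) => //.
  by rewrite -(A2 v r1 m1) // -(A2 v r2 m2).
- have hs : (slot_of k r1 <= slot_of k r2)%N.
    rewrite -(A2 v r1 m1) // -(A2 v r2 m2) //; exact: ltnW.
  exact: Hlt.2 (A3 v r1 r2 m1 m2 (Hh _) (Hh _) S1 S2 e1 e2 hs).
Qed.

Section Safety.
Variables (B : Type) (n : nat).
Implicit Types V : view B n.

Definition Goal V := exists S : {set 'I_n},
  ((n%:R / 3%:R)%R <= (#|S|)%:R :> rat)%R /\ forall v, v \in S -> slashable V v.

Lemma quorum (Q1 Q2 : {set 'I_n}) : two_thirds Q1 -> two_thirds Q2 ->
  ((n%:R / 3%:R)%R <= (#|Q1 :&: Q2|)%:R :> rat)%R.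
Proof.
rewrite /two_thirds => h1 h2.
have h := cardsUI Q1 Q2.
have hu : (#|Q1 :|: Q2| <= n)%N by rewrite -[X in (_ <= X)%N]card_ord max_card.
rewrite ler_pdivrMr // -natrM ler_nat; lia.
Qed.

Lemma e1_case V A A' : justified V A -> justified V A' -> cp_c A = cp_c A' ->
  conflicting (cp_chain A) (cp_chain A') -> Goal V.
Proof.
case=> [|A0 Q hQ hv]; first by move=> _ _ /conflict_gen.
case=> [|A1 Q' hQ' hv'] Hc Hconf.
  by exfalso; apply: (conflict_gen (conflict_sym Hconf)).
exists (Q :&: Q'); split; first exact: quorum.
move=> v; rewrite inE => /andP [i1 i2].
have [m [Vm [s [_ [_ [_ [p1 c1]]]]]]] := hv v i1.
have [m' [Vm' [s' [_ [_ [_ [p1' c1']]]]]]] := hv' v i2.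
exists m, m'; do 4 (split => //); split.
- case=> _ et; rewrite et in p1.
  by case: (prefix_cmp p1 p1') => h; [exact: Hconf.1 h | exact: Hconf.2 h].
- by left; rewrite /E1 c1 c1' Hc.
Qed.

Lemma surround V v m m' (C1 : checkpoint B) : V m -> V m' ->
  vm_sender m = v -> vm_sender m' = v -> vm_src m = C1 ->
  cp_lt (vm_src m') C1 -> (cp_c (vm_tgt m) <= cp_c (vm_tgt m'))%N ->
  slashable V v.
Proof.
move=> Vm Vm' s s' e hlt hc; exists m, m'; do 4 (split => //); split.
- by case=> e1 _; rewrite -e1 e in hlt; case: hlt.
- rewrite leq_eqVlt in hc; case/orP: hc => [/eqP h|h]; first by left.
  by right; split => //; rewrite e.
Qed.

Lemma main V (C1 : checkpoint B) (F : {set 'I_n}) :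
  justified V C1 -> two_thirds F ->
  (forall v, v \in F -> exists m, V m /\ vm_sender m = v /\ vm_src m = C1 /\
     valid_ffg (vm_src m) (vm_tgt m) /\ cp_c (vm_tgt m) = (cp_c C1).+1) ->
  forall J, justified V J -> (cp_c C1 < cp_c J)%N ->
  ~ Defs.prefix (cp_chain C1) (cp_chain J) -> Goal V.
Proof.
move=> jC1 hF hFv J.
suff H : forall c J, (cp_c J <= c)%N -> justified V J -> (cp_c C1 < cp_c J)%N ->
  ~ Defs.prefix (cp_chain C1) (cp_chain J) -> Goal V by apply: H.
elim=> [|c IH] {}J.
  by move=> Hle _ hl; exfalso; lia.
move=> Hle jJ; case: jJ Hle => [|J0 Q hQ hv] Hle Hlt Hnp; first by [].
have key : forall v, v \in Q :&: F -> slashable V v \/ Goal V.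
  move=> v; rewrite inE => /andP [iQ iF].
  have [m [Vm [sm [[vc _] [js [pS [pT cT]]]]]]] := hv v iQ.
  have [m' [Vm' [sm' [srm' [_ cm']]]]] := hFv v iF.
  have htc : (cp_c (vm_tgt m') <= cp_c (vm_tgt m))%N by rewrite cm' cT.
  case: (ltngtP (cp_c (vm_src m)) (cp_c C1)) => hc.
  + left; apply: (surround Vm' Vm sm' sm srm') => //.
    split; first by left.
    by case=> [h|[h _]]; lia.
  + right; apply: (IH (vm_src m)) => //.
      rewrite cT in vc; lia.
    by move=> h; apply: Hnp; exact: prefix_trans h pS.
  + case: (classic (Defs.prefix (cp_chain (vm_src m)) (cp_chain C1))) => hp.
    * case: (classic (blocks (cp_chain (vm_src m)) = blocks (cp_chain C1))) => hb.
        exfalso; apply: Hnp; apply: prefix_trans pS.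
        by exists [::]; rewrite cats0 hb.
      left; apply: (surround Vm' Vm sm' sm srm') => //.
      have hs := strict_prefix_slot hp hb.
      split; first by right; split => //; exact: ltW.
      by case=> [h|[_ h]]; [lia | move: hs; rewrite ltNge h].
    * case: (classic (Defs.prefix (cp_chain C1) (cp_chain (vm_src m)))) => hp'.
        by exfalso; apply: Hnp; exact: prefix_trans hp' pS.
      by right; apply: (e1_case js jC1) => //; split.
case: (classic (forall v, v \in Q :&: F -> slashable V v)) => [hall|hn].
  by exists (Q :&: F); split; [exact: quorum | exact: hall].
case: (not_all_ex_not _ _ hn) => v hv'.
case: (imply_to_and _ _ hv') => hin hns.
by case: (key v hin).
Qed.
End Safety.

Lemma fin_data B n (V W : view B n) (C : checkpoint B) (x : chain B) :
  (forall m, V m -> W m) -> finalized V C -> conflicting (cp_chain C) x ->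
  justified W C /\ exists F : {set 'I_n}, two_thirds F /\
    forall v, v \in F -> exists m, W m /\ vm_sender m = v /\ vm_src m = C /\
     valid_ffg (vm_src m) (vm_tgt m) /\ cp_c (vm_tgt m) = (cp_c C).+1.
Proof.
move=> HVW [-> /conflict_gen []|[jC [F [hF hv]]]] _.
split; first exact: (just_mono HVW jC).
exists F; split => // v /hv [m [Vm h]]; exists m; split => //; exact: HVW.
Qed.

Theorem theorem4p4 (B : Type) (n f k : nat) (E : execution B n) :
  (f <= n)%N -> (0 < k)%N ->
  ffg_voting_ok E k ->
  outputs_finalized E ->
  accountable E ((n%:R / 3%:R)%R : rat).
Proof.
move=> _ _ hA hB; split; first exact: no_false_accusation hA.
move=> [r [r' [i [j [hi [hj hc]]]]]].
have [C1 [f1 p1]] := hB r i hi.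
have [C2 [f2 p2]] := hB r' j hj.
have Hsub : forall r0 m, global_view E r0 m -> all_msgs E m.
  by move=> r0 m [r1 [_ h]]; exists r1.
have hconf := conflict_up hc p1 p2.
have [jC1 [F1 [hF1 hv1]]] := fin_data (Hsub r) f1 hconf.
have [jC2 [F2 [hF2 hv2]]] := fin_data (Hsub r') f2 (conflict_sym hconf).
case: (leqP (cp_c C1) (cp_c C2)) => h.
  rewrite leq_eqVlt in h; case/orP: h => [/eqP e|lt].
    exact: (e1_case jC1 jC2 e hconf).
  exact: (main jC1 hF1 hv1 jC2 lt hconf.1).
exact: (main jC2 hF2 hv2 jC1 h hconf.2).
Qed.
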